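(* Let $J\subseteq S$. The fibers of $\Pi_\downarrow^J$ are order-convex: if $u,x,v\in\mathfrak{S}_n^J$ satisfy $u\le_S x\le_S v$ and $\Pi_\downarrow^J(u)=\Pi_\downarrow^J(v)$, then $\Pi_\downarrow^J(u)=\Pi_\downarrow^J(x)$.
   Context: $\mathfrak{S}_n$ is the symmetric group on $[n]$, $s_i=(i,i+1)$, $S=\{s_1,\dots,s_{n-1}\}$, one-line notation $w=w_1\cdots w_n$, $\mathrm{inv}(w)=\{(i,j):i<j,\ w_i>w_j\}$, and the weak order $u\le_S v\iff\mathrm{inv}(u)\subseteq\mathrm{inv}(v)$. For $J\subseteq S$, $\mathfrak{S}_n^J$ is the set of $w$ with $w_i<w_{i+1}$ whenever $s_i\in J$. Writing $J=S\setminus\{s_{j_1},\dots,s_{j_r}\}$ with $j_1<\dots<j_r$, the $J$-regions are $\{1,\dots,j_1\},\{j_1+1,\dots,j_2\},\dots,\{j_r+1,\dots,n\}$. $\mathfrak{S}_n^J(231)$ is the set of $w\in\mathfrak{S}_n^J$ admitting no indices $i<j<k$ in pairwise different $J$-regions with $w_k<w_i<w_j$ and $w_i=w_k+1$. For each $w\in\mathfrak{S}_n^J$ there is a unique greatest element (in $\le_S$) of $\mathfrak{S}_n^J(231)$ lying below $w$; the map $\Pi_\downarrow^J:\mathfrak{S}_n^J\to\mathfrak{S}_n^J(231)$ sends $w$ to this element. *)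

(* Defs.v *)
From mathcomp Require Import all_boot all_fingroup.
Set Implicit Arguments. Unset Strict Implicit. Unset Printing Implicit Defensive.

(* Conventions (0-based): position p of 'I_n is the paper's index p+1, and
   w p is the paper's value w_{p+1} minus 1.  A subset J of S = {s_1,...,s_{n-1}}
   is J : {set 'I_n.-1}, where k : 'I_n.-1 stands for s_{k+1}, which swaps the
   0-based positions k and k+1. *)

Definition inv n (w : {perm 'I_n}) : {set 'I_n * 'I_n} :=
  [set ij : 'I_n * 'I_n | (ij.1 < ij.2) && (w ij.2 < w ij.1)].

Definition leS n (u v : {perm 'I_n}) : bool := inv u \subset inv v.

Definition genIn n (J : {set 'I_n.-1}) (i : nat) : bool :=
  [exists k : 'I_n.-1, (val k == i) && (k \in J)].

Definition inSJ n (J : {set 'I_n.-1}) (w : {perm 'I_n}) : bool :=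
  [forall i : 'I_n, forall j : 'I_n,
     ((val j == (val i).+1) && genIn J (val i)) ==> (w i < w j)].

(* positions p <= q lie in the same J-region: no region boundary between them,
   i.e. every s_{k+1} with p <= k < q belongs to J *)
Definition sameRegion n (J : {set 'I_n.-1}) (p q : nat) : bool :=
  [forall k : 'I_n.-1, ((p <= val k) && (val k < q)) ==> (k \in J)].

Definition avoid231 n (J : {set 'I_n.-1}) (w : {perm 'I_n}) : bool :=
  inSJ J w &&
  ~~ [exists i : 'I_n, exists j : 'I_n, exists k : 'I_n,
        [&& i < j, j < k,
            ~~ sameRegion J i j, ~~ sameRegion J j k, ~~ sameRegion J i k,
            w k < w i, w i < w j & val (w i) == (val (w k)).+1]].

Definition is_pidown n (J : {set 'I_n.-1}) (w p : {perm 'I_n}) : bool :=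
  avoid231 J p && leS p w &&
  [forall q : {perm 'I_n}, (avoid231 J q && leS q w) ==> leS q p].

(* Pi_down^J(w): the (unique) greatest element of S_n^J(231) below w
   (default w if none exists, which never happens for w \in S_n^J). *)
Definition pidown n (J : {set 'I_n.-1}) (w : {perm 'I_n}) : {perm 'I_n} :=
  if [pick p | is_pidown J w p] is Some p then p else w.

(* Main.v *)
Require Import Defs.
From mathcomp Require Import all_boot all_fingroup.
From mathcomp Require Import zify.
Set Implicit Arguments. Unset Strict Implicit. Unset Printing Implicit Defensive.

Section S.
Variable n : nat.
Variable J : {set 'I_n.-1}.
Implicit Types (w q p : {perm 'I_n}).

Lemma leS_trans (a b c : {perm 'I_n}) : leS a b -> leS b c -> leS a c.
Proof. exact: subset_trans. Qed.

Lemma leS_refl (a : {perm 'I_n}) : leS a a.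
Proof. exact: subxx. Qed.

Lemma leS_inv q w (a b : 'I_n) : leS q w -> a < b -> q b < q a -> w b < w a.
Proof.
move=> H ab qba.
have : (a, b) \in Defs.inv q by rewrite inE /= ab qba.
by move/(subsetP H); rewrite inE /= => /andP[].
Qed.

Lemma lt_of_w q w (a b : 'I_n) : leS q w -> a < b -> w a < w b -> q a < q b.
Proof.
move=> H ab wab; case: (ltngtP (q a) (q b)) => // [qba | /val_inj/perm_inj eab].
  by have := leS_inv H ab qba; rewrite ltnNge ltnW.
by rewrite eab ltnn in ab.
Qed.

Lemma sameRegion_sub a b c d : c <= a -> b <= d -> sameRegion J c d -> sameRegion J a b.
Proof.
move=> ca bd /forallP H; apply/forallP=> k; apply/implyP=> /andP[h1 h2].
by apply: (implyP (H k)); rewrite (leq_trans ca h1) (leq_trans h2 bd).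
Qed.

Lemma key q w (i j k : 'I_n) :
  avoid231 J q -> leS q w ->
  i < j -> j < k -> ~~ sameRegion J i j -> ~~ sameRegion J j k ->
  w i < w j -> val (w i) = (val (w k)).+1 ->
  q i < q k.
Proof.
move=> Aq Lqw ij jk sij sjk wij wik.
have ik : i < k by apply: ltn_trans ij jk.
case: (ltngtP (q i) (q k)) => // [qki | /val_inj/perm_inj eik]; last first.
  by rewrite eik ltnn in ik.
have qij : q i < q j by apply: lt_of_w Lqw ij wij.
pose P := fun r : 'I_n => [&& j < r, ~~ sameRegion J j r & q r < q i].
have Pk : P k by rewrite /P jk sjk qki.
case: (arg_maxnP (fun r => val (q r)) Pk) => r /and3P[jr sjr qri] rmax.
set t := val (q r) in qri rmax.
have t1 : t.+1 < n by apply: leq_ltn_trans qri (ltn_ord _).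
pose l := ((q^-1)%g (Ordinal t1)).
have ql : (q l : nat) = t.+1 by rewrite /l permKV.
have qli : q l <= q i by rewrite ql.
have li : l <= i.
  rewrite leqNgt; apply/negP => il.
  have qli' : q l < q i.
    rewrite ltn_neqAle qli andbT; apply/negP => /eqP/val_inj/perm_inj eli.
    by rewrite eli ltnn in il.
  have rk := rmax k Pk.
  case: (ltngtP l k) => [lk | kl | elk].
  - have h1 := leS_inv Lqw il qli'.
    have h2 : q k < q l by rewrite ql; apply: leq_ltn_trans rk _.
    have h3 := leS_inv Lqw lk h2.
    move: h1 h3; rewrite /= in wik; rewrite wik; lia.
  - have Pl : P l.
      rewrite /P qli' andbT (ltn_trans jk kl) /=.
      apply/negP => sjl; move/negP: sjk; apply.
      by apply: sameRegion_sub sjl => //; apply: ltnW.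
    have := rmax l Pl; rewrite /= ql; lia.
  - move/val_inj: elk => elk; move: rk; rewrite -elk /= ql; lia.
have lj : l < j by apply: leq_ltn_trans li ij.
move: Aq => /andP[_ /negP Hn]; exfalso; apply: Hn; apply/existsP; exists l; apply/existsP; exists j.
apply/existsP; exists r.
rewrite lj jr sjr /=.
have slj : ~~ sameRegion J l j.
  by apply/negP => s; move/negP: sij; apply; apply: sameRegion_sub s.
rewrite slj /=.
have -> : ~~ sameRegion J l r.
  by apply/negP => s; move/negP: slj; apply; apply: sameRegion_sub s => //; apply: ltnW.
rewrite ql ltnSn /= eqxx andbT.
by rewrite -ql; apply: leq_ltn_trans qli qij.
Qed.

Lemma tperm_lt (a b x y : 'I_n) : val a = (val b).+1 ->
  ~~ ((x == a) && (y == b)) -> ~~ ((x == b) && (y == a)) ->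
  (tperm a b y < tperm a b x) = (y < x).
Proof.
move=> ab h1 h2; rewrite /= in ab; rewrite !permE /=.
have vi : forall u v : 'I_n, (u == v) = (nat_of_ord u == nat_of_ord v) by [].
rewrite !vi in h1 h2 *.
move: h1 h2.
case: (eqVneq (nat_of_ord x) (nat_of_ord a)) => xa; case: (eqVneq (nat_of_ord x) (nat_of_ord b)) => xb;
case: (eqVneq (nat_of_ord y) (nat_of_ord a)) => ya; case: (eqVneq (nat_of_ord y) (nat_of_ord b)) => yb;
rewrite /= ?xa ?ya ?xb ?yb; try lia.
Qed.


Lemma inv_swap w (i k : 'I_n) (p r : 'I_n) :
  i < k -> val (w i) = (val (w k)).+1 -> p < r -> (p, r) != (i, k) ->
  ((p, r) \in Defs.inv (w * tperm (w i) (w k))%g) = ((p, r) \in Defs.inv w).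
Proof.
move=> ik wik pr ne; rewrite !inE /= pr /= !permM tperm_lt //.
  by rewrite !(inj_eq perm_inj); move: ne; rewrite xpair_eqE.
rewrite !(inj_eq perm_inj); apply/negP => /andP[/eqP e1 /eqP e2].
by move: pr ik; rewrite e1 e2; lia.
Qed.

Lemma swap_props w (i k : 'I_n) :
  i < k -> val (w i) = (val (w k)).+1 ->
  [/\ (i, k) \in Defs.inv w, (i, k) \notin Defs.inv (w * tperm (w i) (w k))%g
    & leS (w * tperm (w i) (w k))%g w].
Proof.
move=> ik wik.
have h1 : (i, k) \in Defs.inv w by rewrite inE /= ik /=; move: wik => /= ->.
have h2 : (i, k) \notin Defs.inv (w * tperm (w i) (w k))%g.
  by rewrite inE /= ik /= !permM tpermL tpermR; move: wik => /= ->; rewrite ltnNge leqnSn.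
split => //; apply/subsetP => [[p r]] Hpr.
case: (eqVneq (p, r) (i, k)) => [-> //|ne].
have pr : p < r by move: Hpr; rewrite inE /= => /andP[].
by rewrite -(inv_swap ik wik pr ne).
Qed.

Lemma avoid_pidown w : avoid231 J w -> is_pidown J w w.
Proof.
move=> Aw; rewrite /is_pidown Aw leS_refl /=.
by apply/forallP => q; apply/implyP => /andP[].
Qed.

Lemma exists_pidown m : forall w, #|Defs.inv w| <= m -> inSJ J w ->
  exists p, is_pidown J w p.
Proof.
elim: m => [|m IH] w Hc Hw; case Aw: (avoid231 J w);
  try by exists w; apply: avoid_pidown.
all: move: Aw; rewrite /avoid231 Hw /= negbK =>
  /existsP[i /existsP[j /existsP[k /and5P[ij jk sij sjk /and4P[sik wki wij /eqP wik]]]]].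
all: have ik : i < k by apply: ltn_trans ij jk.
all: have [h1 h2 h3] := swap_props ik wik.
  by move: Hc; rewrite leqn0 cards_eq0 => /eqP E; rewrite E inE in h1.
set w' := (w * tperm (w i) (w k))%g in h2 h3.
have Hc' : #|Defs.inv w'| <= m.
  rewrite -ltnS; apply: leq_trans Hc; apply: proper_card; apply/properP; split => //.
  by exists (i, k).
have Hw' : inSJ J w'.
  apply/forallP => i0; apply/forallP => j0; apply/implyP => /andP[/eqP e g].
  have := implyP (forallP (forallP Hw i0) j0); rewrite e g eqxx => /(_ isT) lt.
  rewrite /w' !permM tperm_lt //; rewrite !(inj_eq perm_inj); apply/negP => /andP[/eqP e1 /eqP e2].
    by move: e ik; rewrite e1 e2 /=; lia.
  by move: e ij jk; rewrite e1 e2 /=; lia.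
have [p Pp] := IH w' Hc' Hw'.
exists p; move: Pp => /andP[/andP[Ap Lp] /forallP Mp].
rewrite /is_pidown Ap (leS_trans Lp h3) /=.
apply/forallP => q; apply/implyP => /andP[Aq Lq].
apply: (implyP (Mp q)); rewrite Aq /=.
apply/subsetP => [[p0 r0]] H0.
have H0w := subsetP Lq _ H0.
case: (eqVneq (p0, r0) (i, k)) => [E|ne].
  move: E H0 => [-> ->]; rewrite inE /= ik /=.
  by rewrite ltnNge ltnW // (key Aq Lq ij jk sij sjk wij wik).
have pr : p0 < r0 by move: H0; rewrite inE /= => /andP[].
by rewrite /w' (inv_swap ik wik pr ne).
Qed.

Lemma pidownP w : inSJ J w -> is_pidown J w (pidown J w).
Proof.
move=> Hw; have [p0 P0] := exists_pidown (leqnn _) Hw.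
rewrite /pidown; case: pickP => [p //|H].
by rewrite H in P0.
Qed.

End S.

Theorem lemma3p13 (n : nat) (J : {set 'I_n.-1}) (u x v : {perm 'I_n}) :
  inSJ J u -> inSJ J x -> inSJ J v ->
  leS u x -> leS x v ->
  pidown J u = pidown J v ->
  pidown J u = pidown J x.
Proof.
move=> Hu Hx Hv Lux Lxv E.
have Pu := pidownP Hu; have Pv := pidownP Hv.
rewrite -E in Pv.
move: Pu Pv; set p0 := pidown J u => Pu Pv.
have maxP : forall w p q, is_pidown J w p -> avoid231 J q -> leS q w -> leS q p.
  by move=> w p q /andP[_ /forallP M] Aq Lq; apply: (implyP (M q)); rewrite Aq Lq.
have Eq : is_pidown J u =1 is_pidown J x.
  move=> p; apply/idP/idP.
  - move=> Pp; move: (Pp) => /andP[/andP[Ap Lp] _].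
    rewrite /is_pidown Ap (leS_trans Lp Lux) /=.
    apply/forallP => q; apply/implyP => /andP[Aq Lq].
    apply: (maxP _ _ _ Pp Aq).
    move: Pu => /andP[/andP[_ L0] _].
    exact: leS_trans (maxP _ _ _ Pv Aq (leS_trans Lq Lxv)) L0.
  - move=> Pp; move: (Pp) => /andP[/andP[Ap Lp] _].
    rewrite /is_pidown Ap /=.
    move: Pu => /andP[/andP[_ L0] _].
    rewrite (leS_trans (maxP _ _ _ Pv Ap (leS_trans Lp Lxv)) L0) /=.
    apply/forallP => q; apply/implyP => /andP[Aq Lq].
    exact: (maxP _ _ _ Pp Aq (leS_trans Lq Lux)).
rewrite /p0 /pidown (eq_pick Eq); case: pickP => [//|H].
by move: (H p0); rewrite -Eq Pu.
Qed.
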